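(* Let $\Xi$ be an orthogonally invariant FQ operation (scalar, vectorial, or pseudoscalar) and let $\tilde p^{[s]}_{i_1,\dots,i_r}$ denote its coefficients in the circular basis, where $s\in\{0\}$ (scalar), $s\in\{1,2\}$ (the two components of a vectorial operation) or $s=12$ (pseudoscalar). Let $\iota=(i_1,\dots,i_r)$ with all $i_j\in\{4,5\}$, and put $d=\mathrm{Mult}^4_\iota-\mathrm{Mult}^5_\iota$, where $\mathrm{Mult}^x_\iota$ is the number of occurrences of $x$ in $\iota$. If $d\neq 0$, and moreover either $s\in\{0,12\}$ or $d\neq 1$, then $\tilde p^{[s]}_{i_1,\dots,i_r}=0$. (Thus the only coefficients of this kind not forced to vanish by orthogonal invariance are those with $d=0$, any $s$, and those with $d=1$, $s\in\{1,2\}$.)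
   Context: Setting. $(Q_1,Q_2)$ is a Clifford system: $Q_1^2=Q_2^2=-1$, $Q_1Q_2=-Q_2Q_1$. $R_1,R_2$ are formal noncommuting infinitesimal variables; one works in the real algebra generated by $Q_1,Q_2,R_1,R_2$ (free apart from the Clifford relations), completed with respect to total degree in $R_1,R_2$, or in extensions of it by further formal infinitesimal elements. Put $A_i=Q_i+R_i$. For $Q$ with $Q^2=-1$ and any $X$ put $X^0_Q=\frac12(X+Q^{-1}XQ)$, $X^1_Q=\frac12(X-Q^{-1}XQ)$. The split variables are $r_1,\dots,r_8$: for $j\in\{1,2\}$, $\iota_1,\iota_2\in\{0,1\}$, $r_{4(j-1)+2\iota_1+\iota_2+1}=((R_jQ_j^{-1})^{\iota_1}_{Q_1})^{\iota_2}_{Q_2}$ (so $r_k$ commutes with $Q_m$ if $\iota_m=0$ and anticommutes if $\iota_m=1$). An FQ operation around $(Q_1,Q_2)$ is given by formal real noncommutative power series in eight variables: scalar $\Xi(A_1,A_2)=f_0(r_1,\dots,r_8)$, vectorial $\Xi(A_1,A_2)=(f_1(r)Q_1,f_2(r)Q_2)$, pseudoscalar $\Xi(A_1,A_2)=f_{12}(r)Q_1Q_2$; the operation is identified with this family of series. The same series can be evaluated relative to any other Clifford system $(Q_1',Q_2')$ at $(A_1',A_2')$ with $A'_i-Q'_i$ infinitesimal, by forming the split variables of $A_i'-Q_i'$ relative to $(Q'_1,Q'_2)$ and multiplying by $Q'_s$. Mixed basis: $\hat r_1=\frac12(r_2-r_7)$, $\hat r_2=\frac12(r_2+r_7)$,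 $\hat r_3=\frac12(r_1+r_5)$, $\hat r_4=\frac12(r_1-r_5)$, $\hat r_5=\frac12(r_4-r_8)$, $\hat r_6=\frac12(r_4+r_8)$, $\hat r_7=\frac12(r_3+r_6)$, $\hat r_8=\frac12(r_3-r_6)$. Circular basis: $\tilde r_i=\hat r_i$ for $i\notin\{4,5\}$, $\tilde r_4=\hat r_4+\hat r_5$, $\tilde r_5=\hat r_4-\hat r_5$. Rewriting $f_s$ as a noncommutative power series in $\tilde r_1,\dots,\tilde r_8$, $\tilde p^{[s]}_{i_1,\dots,i_r}$ is the coefficient of $\tilde r_{i_1}\cdots\tilde r_{i_r}$. Orthogonal invariance: let $t$ be a central formal variable with $t^2=0$ and $\mathrm{Rot}_t(B_1,B_2)=(B_1+tB_2,\,B_2-tB_1)$ (then $\mathrm{Rot}_t(Q_1,Q_2)$ is again a Clifford system). A (pseudo)scalar $\Xi$ is orthogonally invariant if $\Xi_{(Q_1,Q_2)}(A_1,A_2)=\Xi_{\mathrm{Rot}_t(Q_1,Q_2)}(\mathrm{Rot}_t(A_1,A_2))$; a vectorial $\Xi$ is orthogonally invariant if $\mathrm{Rot}_t(\Xi_{(Q_1,Q_2)}(A_1,A_2))=\Xi_{\mathrm{Rot}_t(Q_1,Q_2)}(\mathrm{Rot}_t(A_1,A_2))$; here the subscript indicates the base Clifford system relative to which the series is evaluated. *)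

(* Defs.v *)
From HB Require Import structures.
From mathcomp Require Import all_boot all_order all_algebra.
Set Implicit Arguments. Unset Strict Implicit. Unset Printing Implicit Defensive.
Import Order.TTheory GRing.Theory Num.Theory.
Local Open Scope ring_scope.

Section FQ.
Variable R : realFieldType.

(* Basis of the Clifford part: (b1,b2) stands for Q1^b1 Q2^b2. *)
Definition basis := (bool * bool)%type.

(* The (completed) algebra, extended by a central t with t^2 = 0.
   An element X is the formal sum of X u e tau * r_u * e * t^tau, where
   r_u = r_{u_1} ... r_{u_n} is a noncommutative monomial in the split
   variables r_1..r_8 (indexed 0-based by 'I_8), e a basis element, tau : bool. *)
Definition alg := seq 'I_8 -> basis -> bool -> R.

(* Formal noncommutative power series in 8 variables (coefficient of r_w). *)
Definition pser := seq 'I_8 -> R.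

Definition sgn (b : bool) : R := if b then -1 else 1.

(* r_k, k = 4(j-1) + 2 iota1 + iota2 (0-based) *)
Definition iota1 (k : 'I_8) : bool := odd (k %/ 2).
Definition iota2 (k : 'I_8) : bool := odd k.

(* e r_k = (-1)^(lsign e k) r_k e *)
Definition lsign (e : basis) (k : 'I_8) : bool :=
  (e.1 && iota1 k) (+) (e.2 && iota2 k).
Definition wsign (e : basis) (w : seq 'I_8) : bool :=
  foldr (fun k b => lsign e k (+) b) false w.
(* (Q1^a1 Q2^a2)(Q1^b1 Q2^b2) = (-1)^(bsign a b) Q1^(a1+b1) Q2^(a2+b2) *)
Definition bmul (a b : basis) : basis := (a.1 (+) b.1, a.2 (+) b.2).
Definition bsign (a b : basis) : bool :=
  (a.2 && b.1) (+) (a.1 && b.1) (+) (a.2 && b.2).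

Definition alg_add (X Y : alg) : alg := fun u e tau => X u e tau + Y u e tau.
Definition alg_opp (X : alg) : alg := fun u e tau => - X u e tau.
Definition alg_scale (c : R) (X : alg) : alg := fun u e tau => c * X u e tau.
Definition alg_mul (X Y : alg) : alg := fun u e tau =>
  \sum_(i < (size u).+1) \sum_(e1 : basis) \sum_(e2 : basis)
   \sum_(t1 : bool) \sum_(t2 : bool)
    (if (bmul e1 e2 == e) && (nat_of_bool t1 + nat_of_bool t2 == nat_of_bool tau)%N
     then sgn (wsign e1 (drop i u) (+) bsign e1 e2)
            * X (take i u) e1 t1 * Y (drop i u) e2 t2
     else 0).

Definition alg_mono (w : seq 'I_8) (e : basis) (tau : bool) : alg :=
  fun u e' tau' => if (u == w) && (e' == e) && (tau' == tau) then 1 else 0.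

Definition alg1 : alg := alg_mono [::] (false, false) false.
Definition Q1 : alg := alg_mono [::] (true, false) false.
Definition Q2 : alg := alg_mono [::] (false, true) false.
Definition tt : alg := alg_mono [::] (false, false) true.
Definition gen (k : 'I_8) : alg := alg_mono [:: k] (false, false) false.

Definition o8 (n : nat) (H : (n < 8)%N) : 'I_8 := Ordinal H.
Arguments o8 n H : clear implicits.

Definition Rv1 : alg :=
  alg_mul (alg_add (gen (o8 0 isT)) (alg_add (gen (o8 1 isT))
          (alg_add (gen (o8 2 isT)) (gen (o8 3 isT))))) Q1.
Definition Rv2 : alg :=
  alg_mul (alg_add (gen (o8 4 isT)) (alg_add (gen (o8 5 isT))
          (alg_add (gen (o8 6 isT)) (gen (o8 7 isT))))) Q2.
Definition A1 : alg := alg_add Q1 Rv1.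
Definition A2 : alg := alg_add Q2 Rv2.

(* For Q with Q^2 = -1, Q^{-1} = -Q. *)
Definition Qinv (Q : alg) : alg := alg_opp Q.
Definition part0 (Q X : alg) : alg :=
  alg_scale (2%:R)^-1 (alg_add X (alg_mul (alg_mul (Qinv Q) X) Q)).
Definition part1 (Q X : alg) : alg :=
  alg_scale (2%:R)^-1 (alg_add X (alg_opp (alg_mul (alg_mul (Qinv Q) X) Q))).
Definition part (b : bool) : alg -> alg -> alg := if b then part1 else part0.

Definition splitv (P1 P2 B1 B2 : alg) (k : 'I_8) : alg :=
  let X := if (k < 4)%N then alg_mul (alg_add B1 (alg_opp P1)) (Qinv P1)
           else alg_mul (alg_add B2 (alg_opp P2)) (Qinv P2) in
  part (iota2 k) P2 (part (iota1 k) P1 X).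

Definition wprod (x : 'I_8 -> alg) (w : seq 'I_8) : alg :=
  foldr (fun k acc => alg_mul (x k) acc) alg1 w.

(* evaluation of a power series at infinitesimal arguments x_1..x_8 (no
   word-degree-0 component); the truncation n <= size u is then exact. *)
Definition ps_eval (f : pser) (x : 'I_8 -> alg) : alg := fun u e tau =>
  \sum_(n < (size u).+1) \sum_(w : n.-tuple 'I_8) f w * wprod x w u e tau.

Definition rot (B : alg * alg) : alg * alg :=
  (alg_add B.1 (alg_mul tt B.2), alg_add B.2 (alg_opp (alg_mul tt B.1))).

Inductive fqop := FQScalar of pser | FQVect of pser & pser | FQPseudo of pser.

Definition evS (f : pser) (P B : alg * alg) : alg :=
  ps_eval f (splitv P.1 P.2 B.1 B.2).
Definition evV (f1 f2 : pser) (P B : alg * alg) : alg * alg :=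
  (alg_mul (ps_eval f1 (splitv P.1 P.2 B.1 B.2)) P.1,
   alg_mul (ps_eval f2 (splitv P.1 P.2 B.1 B.2)) P.2).
Definition evP (f : pser) (P B : alg * alg) : alg :=
  alg_mul (alg_mul (ps_eval f (splitv P.1 P.2 B.1 B.2)) P.1) P.2.

Definition orth_invariant (Xi : fqop) : Prop :=
  match Xi with
  | FQScalar f => evS f (Q1, Q2) (A1, A2) = evS f (rot (Q1, Q2)) (rot (A1, A2))
  | FQVect f1 f2 => rot (evV f1 f2 (Q1, Q2) (A1, A2))
                    = evV f1 f2 (rot (Q1, Q2)) (rot (A1, A2))
  | FQPseudo f => evP f (Q1, Q2) (A1, A2) = evP f (rot (Q1, Q2)) (rot (A1, A2))
  end.

(* Mixed and circular bases; indices n are the paper's 1-based ones.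
   rc n l = coefficient of r_l (0-based l) in r_n. *)
Definition rc (n : nat) (l : 'I_8) : R := if (l.+1 == n)%N then 1 else 0.
Definition mixed_coef (n : nat) (l : 'I_8) : R := (2%:R)^-1 *
  match n with
  | 1 => rc 2 l - rc 7 l | 2 => rc 2 l + rc 7 l
  | 3 => rc 1 l + rc 5 l | 4 => rc 1 l - rc 5 l
  | 5 => rc 4 l - rc 8 l | 6 => rc 4 l + rc 8 l
  | 7 => rc 3 l + rc 6 l | 8 => rc 3 l - rc 6 l
  | _ => 0 end.
Definition circ_coef (n : nat) (l : 'I_8) : R :=
  match n with
  | 4 => mixed_coef 4 l + mixed_coef 5 l
  | 5 => mixed_coef 4 l - mixed_coef 5 l
  | _ => mixed_coef n l end.
(* circ_mx i l = coefficient of r_l in rtilde_i (both 0-based) *)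
Definition circ_mx : 'M[R]_8 := \matrix_(i < 8, l < 8) circ_coef i.+1 l.

(* coefficient of rtilde_{v_1} ... rtilde_{v_r} in f rewritten in the circular
   basis, i.e. after substituting r = circ_mx^{-1} rtilde *)
Definition ptilde (f : pser) (v : seq 'I_8) : R :=
  \sum_(w : (size v).-tuple 'I_8)
     f w * \prod_(i < size v) (invmx circ_mx) (tnth w i) (tnth (in_tuple v) i).

End FQ.

Arguments o8 n H : clear implicits.
Arguments Q1 {R}. Arguments Q2 {R}. Arguments A1 {R}. Arguments A2 {R}.

Inductive sidx := s_0 | s_1 | s_2 | s_12.

Definition fq_component (R : realFieldType) (Xi : fqop R) (s : sidx) : option (pser R) :=
  match Xi, s with
  | FQScalar f, s_0 => Some f
  | FQVect f1 _, s_1 => Some f1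
  | FQVect _ f2, s_2 => Some f2
  | FQPseudo f, s_12 => Some f
  | _, _ => None
  end.

(* 0-based indices of rtilde_4 and rtilde_5 *)
Definition idx4 : 'I_8 := o8 3 isT.
Definition idx5 : 'I_8 := o8 4 isT.

(* Main.v *)
Require Import Defs.
From HB Require Import structures.
From mathcomp Require Import all_boot all_order all_algebra.
From Stdlib Require Import FunctionalExtensionality.
From mathcomp Require Import ring lra.
Import Order.TTheory GRing.Theory Num.Theory.
Set Implicit Arguments. Unset Strict Implicit. Unset Printing Implicit Defensive.
Local Open Scope ring_scope.

Definition K := (seq 'I_8 * basis * bool)%type.
Definition entry := (rat * K)%type.
Definition coef (L : seq entry) (k : K) : rat :=
  foldr (fun x acc => (if x.2 == k then x.1 else 0) + acc) 0 L.
Definition sgnq (b : bool) : rat := if b then -1 else 1.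
Definition mul1 (x y : entry) : seq entry :=
  let: (c1, (w1, e1, t1)) := x in let: (c2, (w2, e2, t2)) := y in
  if t1 && t2 then [::] else
  [:: (c1 * c2 * sgnq (wsign e1 w2 (+) bsign e1 e2), (w1 ++ w2, bmul e1 e2, t1 || t2))].
Fixpoint mulR (x : entry) (L : seq entry) : seq entry :=
  match L with [::] => [::] | y :: L' => mul1 x y ++ mulR x L' end.
Fixpoint mulL (L1 L2 : seq entry) : seq entry :=
  match L1 with [::] => [::] | x :: L' => mulR x L2 ++ mulL L' L2 end.
Definition negL (L : seq entry) := map (fun x => (- x.1, x.2)) L.
Definition halfL (L : seq entry) := map (fun x => ((2%:R)^-1 * x.1, x.2)) L.
Definition part0L (P X : seq entry) := halfL (X ++ mulL (mulL (negL P) X) P).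
Definition part1L (P X : seq entry) := halfL (X ++ negL (mulL (mulL (negL P) X) P)).
Definition partL (b : bool) := if b then part1L else part0L.
Definition splitvL (P1 P2 B1 B2 : seq entry) (k : 'I_8) : seq entry :=
  let X := if (k < 4)%N then mulL (B1 ++ negL P1) (negL P1)
           else mulL (B2 ++ negL P2) (negL P2) in
  partL (iota2 k) P2 (partL (iota1 k) P1 X).
Definition check (L1 L2 : seq entry) : bool :=
  all (fun k => coef L1 k == coef L2 k) (map snd (L1 ++ L2)).

Definition ords : seq 'I_8 := [:: o8 0 isT; o8 1 isT; o8 2 isT; o8 3 isT;
  o8 4 isT; o8 5 isT; o8 6 isT; o8 7 isT].
Definition Jb : basis := (true, true).
Definition e0 : basis := (false, false).
Definition Mq (k l : nat) : rat :=
  match k, l with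
  | 0, 3 => -1 | 0, 7 => 1 | 1, 1 => -1 | 1, 6 => 1 | 2, 2 => -1 | 2, 5 => 1
  | 3, 0 => -1 | 3, 4 => 1 | 4, 7 => -1 | 4, 3 => 1 | 5, 5 => -1 | 5, 2 => 1
  | 6, 6 => -1 | 6, 1 => 1 | 7, 4 => -1 | 7, 0 => 1 | _, _ => 0 end.
Definition xgL (M : nat -> nat -> rat) (k : 'I_8) : seq entry :=
  (1, ([:: k], e0, false)) :: map (fun l : 'I_8 => (M k l, ([:: l], Jb, true))) ords.
Definition mono1 (w : seq 'I_8) (e : basis) (t : bool) : seq entry := [:: (1, (w, e, t))].
Definition LQ1 := mono1 [::] (true,false) false.
Definition LQ2 := mono1 [::] (false,true) false.
Definition Ltt := mono1 [::] e0 true.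
Definition Lgen k := mono1 [:: k] e0 false.
Definition LRv1 := mulL (Lgen (o8 0 isT) ++ (Lgen (o8 1 isT) ++ (Lgen (o8 2 isT) ++ Lgen (o8 3 isT)))) LQ1.
Definition LRv2 := mulL (Lgen (o8 4 isT) ++ (Lgen (o8 5 isT) ++ (Lgen (o8 6 isT) ++ Lgen (o8 7 isT)))) LQ2.
Definition LA1 := LQ1 ++ LRv1.
Definition LA2 := LQ2 ++ LRv2.
Definition rotL (B : seq entry * seq entry) :=
  (B.1 ++ mulL Ltt B.2, B.2 ++ negL (mulL Ltt B.1)).


Section S.
Variable R : realFieldType.
Local Notation alg := (alg R).
Implicit Types X Y Z : alg.

Definition alg0 : alg := fun _ _ _ => 0.
Definition den (L : seq entry) : alg := fun u e t => ratr (coef L (u, e, t)).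

Lemma algE X Y : (forall u e t, X u e t = Y u e t) -> X = Y.
Proof.
move=> H; apply: functional_extensionality => u; apply: functional_extensionality => e.
by apply: functional_extensionality => t.
Qed.

Lemma sum_only (T : finType) (a : T) (F : T -> R) :
  (forall x, x != a -> F x = 0) -> \sum_x F x = F a.
Proof. by move=> H; rewrite (bigD1 a) //= big1 ?addr0 // => x /H. Qed.
Arguments sum_only {T} a {F}.

Lemma alg_mul_addl X Y Z : alg_mul (alg_add X Y) Z = alg_add (alg_mul X Z) (alg_mul Y Z).
Proof.
apply: algE => u e t; rewrite /alg_mul /alg_add -big_split; apply: eq_bigr => i _.
rewrite -big_split; apply: eq_bigr => e1 _.
rewrite -big_split; apply: eq_bigr => e2 _.
rewrite -big_split; apply: eq_bigr => t1 _.
rewrite -big_split; apply: eq_bigr => t2 _.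
by case: ifP => _; rewrite /= ?addr0 // mulrDr mulrDl.
Qed.

Lemma alg_mul_addr X Y Z : alg_mul X (alg_add Y Z) = alg_add (alg_mul X Y) (alg_mul X Z).
Proof.
apply: algE => u e t; rewrite /alg_mul /alg_add -big_split; apply: eq_bigr => i _.
rewrite -big_split; apply: eq_bigr => e1 _.
rewrite -big_split; apply: eq_bigr => e2 _.
rewrite -big_split; apply: eq_bigr => t1 _.
rewrite -big_split; apply: eq_bigr => t2 _.
by case: ifP => _; rewrite /= ?addr0 // mulrDr.
Qed.

Lemma alg_mul_0l X : alg_mul alg0 X = alg0.
Proof.
apply: algE => u e t; rewrite /alg_mul /alg0 big1 // => i _.
rewrite big1 // => e1 _; rewrite big1 // => e2 _; rewrite big1 // => t1 _.
by rewrite big1 // => t2 _; rewrite mulr0 mul0r if_same.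
Qed.

Lemma alg_mul_0r X : alg_mul X alg0 = alg0.
Proof.
apply: algE => u e t; rewrite /alg_mul /alg0 big1 // => i _.
rewrite big1 // => e1 _; rewrite big1 // => e2 _; rewrite big1 // => t1 _.
by rewrite big1 // => t2 _; rewrite mulr0 if_same.
Qed.

Lemma alg_mul_scalel a X Y : alg_mul (alg_scale a X) Y = alg_scale a (alg_mul X Y).
Proof.
apply: algE => u e t; rewrite /alg_mul /alg_scale mulr_sumr; apply: eq_bigr => i _.
rewrite mulr_sumr; apply: eq_bigr => e1 _.
rewrite mulr_sumr; apply: eq_bigr => e2 _.
rewrite mulr_sumr; apply: eq_bigr => t1 _.
rewrite mulr_sumr; apply: eq_bigr => t2 _.
by case: ifP => _; rewrite /= ?mulr0 //; ring.
Qed.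

Lemma alg_mul_scaler a X Y : alg_mul X (alg_scale a Y) = alg_scale a (alg_mul X Y).
Proof.
apply: algE => u e t; rewrite /alg_mul /alg_scale mulr_sumr; apply: eq_bigr => i _.
rewrite mulr_sumr; apply: eq_bigr => e1 _.
rewrite mulr_sumr; apply: eq_bigr => e2 _.
rewrite mulr_sumr; apply: eq_bigr => t1 _.
rewrite mulr_sumr; apply: eq_bigr => t2 _.
by case: ifP => _; rewrite /= ?mulr0 //; ring.
Qed.

Definition supp (m : nat) X := forall u e t, size u != m -> X u e t = 0.

Lemma mul_suppl m X Y u e tau : supp m X ->
  alg_mul X Y u e tau = if (m <= size u)%N then
   \sum_(e1 : basis) \sum_(e2 : basis) \sum_(t1 : bool) \sum_(t2 : bool)
    (if (bmul e1 e2 == e) && (nat_of_bool t1 + nat_of_bool t2 == nat_of_bool tau)%N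
     then sgn R (wsign e1 (drop m u) (+) bsign e1 e2) * X (take m u) e1 t1 * Y (drop m u) e2 t2
     else 0)
  else 0.
Proof.
move=> sX; rewrite /alg_mul.
have Z i : size (take i u) != m ->
  \sum_(e1 : basis) \sum_(e2 : basis) \sum_(t1 : bool) \sum_(t2 : bool)
    (if (bmul e1 e2 == e) && (nat_of_bool t1 + nat_of_bool t2 == nat_of_bool tau)%N
     then sgn R (wsign e1 (drop i u) (+) bsign e1 e2) * X (take i u) e1 t1 * Y (drop i u) e2 t2
     else 0) = 0.
  move=> hs; rewrite big1 // => e1 _; rewrite big1 // => e2 _; rewrite big1 // => t1 _.
  by rewrite big1 // => t2 _; rewrite sX // mulr0 mul0r if_same.
case: leqP => hm.
  have hm' : (m < (size u).+1)%N by rewrite ltnS.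
  rewrite (sum_only (Ordinal hm')) //= => i ne; apply: Z.
  rewrite size_take; case: ltnP => hi.
    by apply: contra ne => /eqP hi'; apply/eqP/val_inj => /=.
  have ei : (i : nat) = size u by apply/eqP; rewrite eqn_leq hi -ltnS ltn_ord.
  by rewrite -ei; apply: contra ne => /eqP hi'; apply/eqP/val_inj.
rewrite big1 // => i _; apply: Z; rewrite size_take.
case: ltnP => hi; rewrite neq_ltn; apply/orP; left; last by [].
by rewrite (ltn_trans hi hm).
Qed.


Lemma coef_cat L1 L2 k : coef (L1 ++ L2) k = coef L1 k + coef L2 k.
Proof. by elim: L1 => [|x L IH] /=; rewrite ?add0r // IH addrA. Qed.
Lemma coef_neg L k : coef (negL L) k = - coef L k.
Proof.
elim: L => [|x L IH] /=; first by rewrite oppr0.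
by rewrite IH opprD; case: ifP; rewrite ?oppr0.
Qed.
Lemma coef_half L k : coef (halfL L) k = (2%:R)^-1 * coef L k.
Proof.
elim: L => [|x L IH] /=; first by rewrite mulr0.
by rewrite IH mulrDr; case: ifP; rewrite ?mulr0.
Qed.

Lemma den_catE L1 L2 : alg_add (den L1) (den L2) = den (L1 ++ L2).
Proof. by apply: algE => u e t; rewrite /den /alg_add coef_cat rmorphD. Qed.
Lemma den_negE L : alg_opp (den L) = den (negL L).
Proof. by apply: algE => u e t; rewrite /den /alg_opp coef_neg rmorphN. Qed.
Lemma ratr_half : ratr ((2%:R)^-1 : rat) = (2%:R)^-1 :> R.
Proof. by rewrite fmorphV rmorph_nat. Qed.
Lemma den_halfE L : alg_scale (2%:R)^-1 (den L) = den (halfL L).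
Proof. by apply: algE => u e t; rewrite /den /alg_scale coef_half rmorphM fmorphV rmorph_nat. Qed.
Lemma den_nil : den [::] = alg0.
Proof. by apply: algE => u e t; rewrite /den /= rmorph0. Qed.

Lemma key_eq (w u : seq 'I_8) (e e' : basis) (t t' : bool) :
  ((w, e, t) == (u, e', t')) = (u == w) && (e' == e) && (t' == t).
Proof. by rewrite !xpair_eqE [w == _]eq_sym [e == _]eq_sym [t == _]eq_sym. Qed.

Lemma den1 c w e t : den [:: (c, (w, e, t))] = alg_scale (ratr c) (@alg_mono R w e t).
Proof.
apply: algE => u e' t'; rewrite /den /alg_scale /alg_mono /= addr0 key_eq.
by case: ifP; rewrite ?rmorph0 ?mulr1 ?mulr0.
Qed.

Lemma mono_den w e t : @alg_mono R w e t = den (mono1 w e t) :> alg.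
Proof.
apply: algE => u e' t'; rewrite /den /mono1 /alg_mono /= addr0 key_eq.
by case: ifP; rewrite ?rmorph0 ?rmorph1.
Qed.

Lemma ratr_sgnq b : ratr (sgnq b) = sgn R b.
Proof. by case: b; rewrite /= ?rmorphN rmorph1. Qed.

Lemma supp_mono w e t : supp (size w) (@alg_mono R w e t : alg).
Proof.
move=> u e' t' hs; rewrite /alg_mono; case: eqP => // eu.
by rewrite eu eqxx in hs.
Qed.

Lemma mono_mono w1 e1 t1 w2 e2 t2 :
  alg_mul (@alg_mono R w1 e1 t1) (@alg_mono R w2 e2 t2)
  = den (mul1 (1, (w1, e1, t1)) (1, (w2, e2, t2))) :> alg.
Proof.
apply: algE => u e tau; rewrite (mul_suppl _ _ _ _ (@supp_mono w1 e1 t1)).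
rewrite (sum_only e1); last first.
  move=> x nx; rewrite big1 // => y _; rewrite big1 // => a _; rewrite big1 // => b _.
  by rewrite /alg_mono (negbTE nx) !andbF andFb mulr0 mul0r if_same.
rewrite (sum_only e2); last first.
  move=> x nx; rewrite big1 // => a _; rewrite big1 // => b _.
  by rewrite /alg_mono [x == e2](negbTE nx) !andbF andFb mulr0 if_same.
rewrite (sum_only t1); last first.
  move=> x nx; rewrite big1 // => b _.
  by rewrite /alg_mono (negbTE nx) !andbF mulr0 mul0r if_same.
rewrite (sum_only t2); last first.
  by move=> x nx; rewrite /alg_mono (negbTE nx) !andbF mulr0 if_same.
rewrite /alg_mono !eqxx !andbT /den /mul1.
have [eu|neu] := eqVneq u (w1 ++ w2).
  rewrite eu size_cat leq_addr take_size_cat // drop_size_cat // !eqxx /= !mulr1.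
  case: t1; case: t2; case: tau => /=; rewrite ?rmorph0 ?andbF ?andbT //;
  rewrite addr0 key_eq eqxx /= ?andbT ?(eq_sym (bmul e1 e2) e);
  by case: (e == bmul e1 e2); rewrite ?rmorph0 //= !mul1r ratr_sgnq.
have H0 : ~~ ((take (size w1) u == w1) && (drop (size w1) u == w2)).
  apply: contra neu => /andP[/eqP h1 /eqP h2].
  by rewrite -h1 -h2 cat_take_drop.
have -> : coef (if t1 && t2 then [::] else [:: (1 * 1 * sgnq (wsign e1 w2 (+) bsign e1 e2),
             (w1 ++ w2, bmul e1 e2, t1 || t2))]) (u, e, tau) = 0.
  case: (t1 && t2) => //=; rewrite addr0 key_eq (negbTE neu) //.
rewrite rmorph0; case: ifP => // _; case: ifP => // _.
by move: H0; case: (take _ _ == _); case: (drop _ _ == _); rewrite //= ?mulr0 ?mul0r.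
Qed.


Lemma den_cons x L : den (x :: L) = alg_add (den [:: x]) (den L).
Proof. by rewrite den_catE. Qed.

Lemma den_mul1 x y : alg_mul (den [:: x]) (den [:: y]) = den (mul1 x y).
Proof.
case: x => c1 [[w1 e1] t1]; case: y => c2 [[w2 e2] t2].
rewrite !den1 alg_mul_scalel alg_mul_scaler mono_mono.
apply: algE => u e t; rewrite /alg_scale /den /mul1.
case: (t1 && t2) => /=; first by rewrite rmorph0 !mulr0.
rewrite !addr0; case: ifP => _; rewrite ?rmorph0 ?mulr0 //.
by rewrite !rmorphM !rmorph1 !mul1r mulrA.
Qed.

Lemma den_mulR x L : alg_mul (den [:: x]) (den L) = den (mulR x L).
Proof.
elim: L => [|y L IH] /=; first by rewrite den_nil alg_mul_0r.
by rewrite (den_cons y L) alg_mul_addr IH den_mul1 den_catE.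
Qed.

Lemma den_mulE L1 L2 : alg_mul (den L1) (den L2) = den (mulL L1 L2).
Proof.
elim: L1 => [|x L IH] /=; first by rewrite den_nil alg_mul_0l.
by rewrite (den_cons x L) alg_mul_addl IH den_mulR den_catE.
Qed.

Lemma den_part b P L : part b (den P) (den L) = den (partL b P L).
Proof.
by case: b; rewrite /part /partL /part0 /part1 /part0L /part1L /Qinv
  !(den_negE, den_mulE, den_catE, den_halfE).
Qed.

Lemma den_splitv P1 P2 B1 B2 k :
  splitv (den P1) (den P2) (den B1) (den B2) k = den (splitvL P1 P2 B1 B2 k).
Proof.
rewrite /splitv /splitvL /Qinv; case: (k < 4)%N;
by rewrite !(den_negE, den_mulE, den_catE) !den_part.
Qed.

Lemma coef_notin L k : k \notin map snd L -> coef L k = 0.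
Proof.
elim: L => [|x L IH] //=; rewrite inE negb_or => /andP[nk /IH ->].
by rewrite eq_sym (negbTE nk) addr0.
Qed.

Lemma den_check L1 L2 : check L1 L2 -> den L1 = den L2.
Proof.
move=> /allP H; apply: algE => u e t; rewrite /den; congr ratr.
case: (boolP ((u, e, t) \in map snd (L1 ++ L2))) => [/H/eqP //|hn].
move: hn; rewrite map_cat mem_cat negb_or => /andP[h1 h2].
by rewrite !coef_notin.
Qed.

Lemma Q1E : Q1 = den LQ1 :> alg. Proof. exact: mono_den. Qed.
Lemma Q2E : Q2 = den LQ2 :> alg. Proof. exact: mono_den. Qed.
Lemma A1E : A1 = den LA1 :> alg.
Proof.
by rewrite /A1 /Rv1 /Q1 /gen !mono_den !(den_negE, den_mulE, den_catE).
Qed.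
Lemma A2E : A2 = den LA2 :> alg.
Proof.
by rewrite /A2 /Rv2 /Q2 /gen !mono_den !(den_negE, den_mulE, den_catE).
Qed.
Lemma rotE a b : Defs.rot (den a, den b) = (den (rotL (a, b)).1, den (rotL (a, b)).2).
Proof. by rewrite /Defs.rot /tt /= mono_den !(den_negE, den_mulE, den_catE). Qed.

Lemma mem_ords (k : 'I_8) : k \in ords.
Proof. by case: k => [[|[|[|[|[|[|[|[|//]]]]]]]]] ?; rewrite !inE. Qed.

Lemma check_rot : all (fun k => check (splitvL (rotL (LQ1,LQ2)).1 (rotL (LQ1,LQ2)).2
   (rotL (LA1,LA2)).1 (rotL (LA1,LA2)).2 k) (xgL Mq k)) ords.
Proof. by vm_compute. Qed.
Lemma check_0 : all (fun k => check (splitvL LQ1 LQ2 LA1 LA2 k) (xgL (fun _ _ => 0) k)) ords.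
Proof. by vm_compute. Qed.

Lemma splitv_rot k : splitv (Defs.rot (Q1, Q2)).1 (Defs.rot (Q1, Q2)).2 (Defs.rot (A1, A2)).1 (Defs.rot (A1, A2)).2 k
   = den (xgL Mq k) :> alg.
Proof.
rewrite Q1E Q2E A1E A2E !rotE /= den_splitv; apply: den_check.
exact: (allP check_rot k (mem_ords k)).
Qed.
Lemma splitv_0 k : splitv Q1 Q2 A1 A2 k = den (xgL (fun _ _ => 0) k) :> alg.
Proof.
rewrite Q1E Q2E A1E A2E den_splitv; apply: den_check.
exact: (allP check_0 k (mem_ords k)).
Qed.


Lemma coef_map_seq (s : seq 'I_8) (g : 'I_8 -> rat) u b t : uniq s ->
  coef (map (fun l => (g l, ([:: l], Jb, true))) s) (u, b, t) =
  match u with [:: a] => if t && (b == Jb) && (a \in s) then g a else 0 | _ => 0 end.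
Proof.
elim: s => [|l s IH] /=; first by case: u => [|a [|]] //; rewrite andbF.
move=> /andP[nl us]; rewrite IH // key_eq.
case: u {IH} => [|a [|a' u]] /=; rewrite ?add0r ?addr0 ?eqseq_cons ?andbF //=.
rewrite inE andbT; case: t; case: (b == Jb); rewrite /= ?andbF ?add0r ?addr0 //.
case: eqP => [->|_] /=; last by rewrite add0r.
by rewrite (negbTE nl) addr0.
Qed.

Lemma coef_cons x L k : coef (x :: L) k = (if x.2 == k then x.1 else 0) + coef L k.
Proof. by []. Qed.

Definition xgv (M : nat -> nat -> rat) (k : 'I_8) (u : seq 'I_8) (b : basis) (t : bool) : R :=
  match u with
  | [:: a] => if t then (if b == Jb then ratr (M k a) else 0)
              else (if (b == e0) && (a == k) then 1 else 0)
  | _ => 0 end.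

Lemma xg_val M k u b t : den (xgL M k) u b t = xgv M k u b t.
Proof.
rewrite /den /xgL coef_cons coef_map_seq // key_eq /xgv /=.
case: u => [|a [|a' u]] /=; rewrite ?add0r ?addr0 ?eqseq_cons ?andbF /= ?rmorph0 //.
rewrite mem_ords ?andbT ?eqseq_cons ?andbT.
case: t => /=; rewrite ?andbF ?andbT ?add0r ?addr0.
  by case: ifP; rewrite ?rmorph0.
by case: (a == k); case: (b == e0); rewrite /= ?rmorph0 ?rmorph1.
Qed.


Lemma sum_basis (F : basis -> R) :
  \sum_(e : basis) F e = F (true,true) + F (true,false) + F (false,true) + F (false,false).
Proof.
rewrite (eq_bigr (fun p : basis => F (p.1, p.2))); last by case.
by rewrite -(pair_big xpredT xpredT (fun a b => F (a, b))) /= !big_bool /= addrA.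
Qed.

Lemma sum_bool (F : bool -> R) : \sum_(b : bool) F b = F true + F false.
Proof. by rewrite big_bool. Qed.

Definition o0 : 'I_8 := o8 0 isT.

Definition Sw (M : nat -> nat -> rat) (w u : seq 'I_8) : R :=
  \sum_(j < size w) (if u == set_nth o0 w j (nth o0 u j)
     then ratr (M (nth o0 w j) (nth o0 u j)) * sgn R (wsign Jb (drop j.+1 u)) else 0).

Definition Wf M (w u : seq 'I_8) (e : basis) (t : bool) : R :=
  if t then (if (e == Jb) && (size u == size w) then Sw M w u else 0)
  else (if (u == w) && (e == e0) then 1 else 0).

Lemma wsign0 s : wsign e0 s = false.
Proof. by elim: s => //= k s ->. Qed.

Lemma Sw_cons M k w a u :
  Sw M (k :: w) (a :: u) = (if u == w then ratr (M k a) * sgn R (wsign Jb u) else 0)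
     + (if a == k then Sw M w u else 0).
Proof.
rewrite /Sw big_ord_recl; congr (_ + _); first by rewrite /= eqseq_cons eqxx drop0.
case: (eqVneq a k) => [->|nak].
  by apply: eq_bigr => j _; rewrite /= ?bump0 !add0n eqseq_cons eqxx.
by rewrite big1 // => j _; rewrite /= eqseq_cons (negbTE nak).
Qed.

End S.

Arguments sum_only {R T} a {F}.
Section S.
Variable R : realFieldType.

Lemma step_sum M k a u (G : basis -> bool -> R) e t :
 \sum_(e1 : basis) \sum_(e2 : basis) \sum_(t1 : bool) \sum_(t2 : bool)
    (if (bmul e1 e2 == e) && (nat_of_bool t1 + nat_of_bool t2 == nat_of_bool t)%N
     then sgn R (wsign e1 u (+) bsign e1 e2) * xgv R M k [:: a] e1 t1 * G e2 t2
     else 0)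
 = (if a == k then G e t else 0) +
   (if t then ratr (M k a) * sgn R (wsign Jb u (+) bsign Jb (bmul Jb e)) * G (bmul Jb e) false else 0).
Proof.
rewrite !sum_basis !sum_bool /xgv.
case: e => [[] []]; case: t; rewrite /= !wsign0 /=.
Time all: case: (a == k); rewrite /= ?mulr0 ?mul0r ?addr0 ?add0r ?mulr1 ?mul1r //.
all: rewrite /Jb /bsign /bmul /= ?addbF; ring.
Qed.

Lemma supp_xgv M k : supp 1 (xgv R M k).
Proof. by move=> u e t; case: u => [|a [|]]. Qed.

Lemma wprod_val M w u e t :
  wprod (fun k => den R (xgL M k)) w u e t = Wf R M w u e t.
Proof.
elim: w u e t => [|k w IH] u e t.
  rewrite /wprod /= /alg1 /alg_mono /Wf /Sw big_ord0 if_same.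
  by case: t; rewrite /= ?andbF ?andbT.
have -> : wprod (fun k => den R (xgL M k)) (k :: w) =
   alg_mul (xgv R M k) (fun u e t => Wf R M w u e t).
  rewrite /= -/(wprod _ w); congr alg_mul; apply: algE => x y z; [exact: xg_val | exact: IH].
rewrite (mul_suppl _ _ _ _ (supp_xgv M k)).
case: u => [|a u]; first by rewrite /Wf; case: t; rewrite /= ?andbF.
have h1 : (1 <= size (a :: u))%N by [].
have h2 : take 1 (a :: u) = [:: a] by rewrite /= take0.
have h3 : drop 1 (a :: u) = u by rewrite /= drop0.
rewrite h1 h2 h3.
rewrite (step_sum M k a u (fun e2 t2 => Wf R M w u e2 t2) e t).
rewrite /Wf; case: t => /=; last first.
  by rewrite eqseq_cons; case: (a == k); rewrite /= ?addr0 ?add0r.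
rewrite Sw_cons eqSS.
case: e => [[] []]; rewrite /Jb /bmul /bsign /e0 /= ?andbT; first last.
all: try (by rewrite if_same add0r ?xpair_eqE /= ?andbF /= mulr0).
rewrite addbF.
case: (eqVneq u w) => [->|nuw].
  by rewrite !eqxx mulr1; case: (a == k); rewrite ?addr0 ?add0r // addrC.
rewrite /= mulr0 addr0 add0r.
by case: (size u == size w); case: (a == k).
Qed.

Local Notation Fv M f u e t := (ps_eval f (fun k => den R (xgL M k)) u e t).

Lemma Fv_sum M f u e t : Fv M f u e t = \sum_(w : (size u).-tuple 'I_8) f w * Wf R M w u e t.
Proof.
rewrite /ps_eval big_ord_recr /= big1 ?add0r.
  by apply: eq_bigr => w _; rewrite wprod_val.
move=> i _; rewrite big1 // => w _; rewrite wprod_val /Wf.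
have hs : (size u == size w) = false.
  by rewrite size_tuple; apply/negbTE; rewrite neq_ltn ltn_ord orbT.
case: t; first by rewrite hs andbF mulr0.
case: (eqVneq u w) => [eu|]; last by rewrite mulr0.
by move: (congr1 size eu) => /eqP; rewrite hs.
Qed.

Lemma Fv_00 M f u : Fv M f u e0 false = f u.
Proof.
rewrite Fv_sum (sum_only (in_tuple u)) /Wf ?eqxx ?mulr1 // => w nw.
case: (eqVneq u w) => [eu|]; last by rewrite mulr0.
by case/eqP: nw; apply: val_inj.
Qed.

Lemma Fv_false M f u e : e != e0 -> Fv M f u e false = 0.
Proof. by move=> ne; rewrite Fv_sum big1 // => w _; rewrite /Wf (negbTE ne) andbF mulr0. Qed.

Lemma Fv_true M f u e : e != Jb -> Fv M f u e true = 0.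
Proof. by move=> ne; rewrite Fv_sum big1 // => w _; rewrite /Wf (negbTE ne) mulr0. Qed.

Lemma Fv_J M f u : Fv M f u Jb true = \sum_(w : (size u).-tuple 'I_8) f w * Sw R M w u.
Proof. by rewrite Fv_sum; apply: eq_bigr => w _; rewrite /Wf eqxx size_tuple eqxx. Qed.

Lemma Fv0_true f u e : Fv (fun _ _ => 0) f u e true = 0.
Proof.
rewrite Fv_sum big1 // => w _; rewrite /Wf /Sw; case: ifP => _; last by rewrite mulr0.
by rewrite big1 ?mulr0 // => j _; rewrite rmorph0 mul0r if_same.
Qed.

Lemma mul_supp0r X Y u e tau : supp 0 Y ->
  alg_mul X Y u e tau =
   \sum_(e1 : basis) \sum_(e2 : basis) \sum_(t1 : bool) \sum_(t2 : bool)
    (if (bmul e1 e2 == e) && (nat_of_bool t1 + nat_of_bool t2 == nat_of_bool tau)%N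
     then sgn R (bsign e1 e2) * X u e1 t1 * Y [::] e2 t2 else 0).
Proof.
move=> sY; rewrite /alg_mul (sum_only ord_max) /=; last first.
  move=> i ni; rewrite big1 // => e1 _; rewrite big1 // => e2 _; rewrite big1 // => t1 _.
  rewrite big1 // => t2 _; rewrite sY ?mulr0 ?if_same // size_drop subn_eq0 -ltnNge.
  have := ltn_ord i; rewrite ltnS leq_eqVlt => /orP[/eqP hi|//].
  by case/eqP: ni; apply: val_inj.
rewrite drop_size take_size; apply: eq_bigr => e1 _; apply: eq_bigr => e2 _.
by apply: eq_bigr => t1 _; apply: eq_bigr => t2 _.
Qed.

Lemma supp_mono0 b t : supp 0 (@alg_mono R [::] b t).
Proof. exact: (@supp_mono R [::] b t). Qed.

Lemma mulQr X b u e tau :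
  alg_mul X (@alg_mono R [::] b false) u e tau = sgn R (bsign (bmul e b) b) * X u (bmul e b) tau.
Proof.
rewrite (@mul_supp0r X _ u e tau (supp_mono0 b false)) !sum_basis !sum_bool /alg_mono /=.
case: e => [[] []]; case: b => [[] []]; case: tau; rewrite /bmul /bsign /= ?xpair_eqE /=; ring.
Qed.

Lemma mulQtr X b u e tau :
  alg_mul X (@alg_mono R [::] b true) u e tau =
  if tau then sgn R (bsign (bmul e b) b) * X u (bmul e b) false else 0.
Proof.
rewrite (@mul_supp0r X _ u e tau (supp_mono0 b true)) !sum_basis !sum_bool /alg_mono /=.
case: e => [[] []]; case: b => [[] []]; case: tau; rewrite /bmul /bsign /= ?xpair_eqE /=. all: ring.
Qed.

Lemma mul_ttl X u e tau :
  alg_mul (@alg_mono R [::] (false,false) true) X u e tau = if tau then X u e false else 0.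
Proof.
rewrite (mul_suppl _ _ _ _ (@supp_mono R [::] (false,false) true)) /= !sum_basis !sum_bool /alg_mono /= !wsign0.
rewrite ?take0 ?drop0 ?eqxx.
case: e => [[] []]; case: tau; rewrite /bmul /bsign /= ?xpair_eqE /= ?andbF ?andbT /=. all: ring.
Qed.

End S.

Section S.
Variable R : realFieldType.

Lemma alg_mul_oppr (X Y : alg R) : alg_mul X (alg_opp Y) = alg_opp (alg_mul X Y).
Proof.
apply: algE => u e t; rewrite /alg_mul /alg_opp -sumrN; apply: eq_bigr => i _.
rewrite -sumrN; apply: eq_bigr => e1 _.
rewrite -sumrN; apply: eq_bigr => e2 _.
rewrite -sumrN; apply: eq_bigr => t1 _.
rewrite -sumrN; apply: eq_bigr => t2 _.
by case: ifP => _; rewrite /= ?oppr0 // mulrN.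
Qed.

Lemma sv0 : splitv (@Q1 R, @Q2 R).1 (@Q1 R, @Q2 R).2 (@A1 R, @A2 R).1 (@A1 R, @A2 R).2
  = fun k => den R (xgL (fun _ _ => 0) k).
Proof. apply: functional_extensionality => k; exact: splitv_0. Qed.

Lemma svr : splitv (Defs.rot (@Q1 R, @Q2 R)).1 (Defs.rot (@Q1 R, @Q2 R)).2
   (Defs.rot (@A1 R, @A2 R)).1 (Defs.rot (@A1 R, @A2 R)).2
  = fun k => den R (xgL Mq k).
Proof. apply: functional_extensionality => k; exact: splitv_rot. Qed.

Lemma rotQ : Defs.rot (@Q1 R, @Q2 R) =
  (alg_add Q1 (@alg_mono R [::] (false,true) true),
   alg_add Q2 (alg_opp (@alg_mono R [::] (true,false) true))).
Proof.
rewrite Q1E Q2E rotE !mono_den !(den_negE, den_catE); congr pair; apply: den_check; by vm_compute.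
Qed.

Definition Sf M (f : pser R) (u : seq 'I_8) : R :=
  \sum_(w : (size u).-tuple 'I_8) f w * Sw R M w u.

Lemma rel_scalar f : orth_invariant (FQScalar f) -> forall u, Sf Mq f u = 0.
Proof.
move=> H u; move: H; rewrite /orth_invariant /evS sv0 svr => /(congr1 (fun X => X u Jb true)).
by rewrite Fv0_true Fv_J => ->.
Qed.


Lemma rel_vect f1 f2 : orth_invariant (FQVect f1 f2) ->
  forall u, Sf Mq f1 u = f2 u - f1 u /\ Sf Mq f2 u = f1 u - f2 u.
Proof.
move=> H u; move: H; rewrite /orth_invariant /evV sv0 svr rotQ /Defs.rot /= => H.
have H1 := congr1 (fun p => p.1 u (false,true) true) H.
have H2 := congr1 (fun p => p.2 u (true,false) true) H.
move: H1 H2; rewrite /= /Q1 /Q2 /tt !alg_mul_addr !alg_mul_oppr /alg_add /alg_opp /=.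
rewrite !mulQr !mulQtr !mul_ttl /= !mulQr /bmul /bsign /=.
rewrite !Fv0_true !Fv_00 !Fv_J -/(Sf Mq f1 u) -/(Sf Mq f2 u) => h1 h2; split.
  have -> : Sf Mq f1 u = (1 * Sf Mq f1 u + 1 * f1 u) - f1 u by ring.
  by rewrite -h1; ring.
have -> : Sf Mq f2 u = - (-1 * Sf Mq f2 u - 1 * f2 u) - f2 u by ring.
by rewrite -h2; ring.
Qed.

Lemma rel_pseudo f : orth_invariant (FQPseudo f) -> forall u, Sf Mq f u = 0.
Proof.
move=> H u; move: H; rewrite /orth_invariant /evP sv0 svr rotQ /=.
move=> /(congr1 (fun X => X u (false,false) true)).
rewrite /Q1 /Q2 !alg_mul_addr !alg_mul_oppr /alg_add /alg_opp /=.
rewrite !mulQr !mulQtr /= ?mulQr ?mulQtr /bmul /bsign /=.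
rewrite !Fv0_true !Fv_00 !Fv_J -/(Sf Mq f u) => h.
have -> : Sf Mq f u = - (-1 * (1 * Sf Mq f u + 1 * f u) - -1 * (1 * f u + 0)) by ring.
by rewrite -h; ring.
Qed.
End S.

Definition half : rat := (2%:R)^-1.
Definition nq (l j : nat) : rat :=
  match l, j with
  | 0, 2 => 1 | 0, 3 => half | 0, 4 => half
  | 1, 0 => 1 | 1, 1 => 1
  | 2, 6 => 1 | 2, 7 => 1
  | 3, 3 => half | 3, 4 => - half | 3, 5 => 1
  | 4, 2 => 1 | 4, 3 => - half | 4, 4 => - half
  | 5, 6 => 1 | 5, 7 => -1
  | 6, 0 => -1 | 6, 1 => 1
  | 7, 3 => - half | 7, 4 => half | 7, 5 => 1
  | _, _ => 0 end.
Definition rcn (n l : nat) : rat := if (l.+1 == n)%N then 1 else 0.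
Definition mixedn (n l : nat) : rat := half *
  match n with
  | 1 => rcn 2 l - rcn 7 l | 2 => rcn 2 l + rcn 7 l
  | 3 => rcn 1 l + rcn 5 l | 4 => rcn 1 l - rcn 5 l
  | 5 => rcn 4 l - rcn 8 l | 6 => rcn 4 l + rcn 8 l
  | 7 => rcn 3 l + rcn 6 l | 8 => rcn 3 l - rcn 6 l
  | _ => 0 end.
Definition circn (n l : nat) : rat :=
  match n with
  | 4 => mixedn 4 l + mixedn 5 l
  | 5 => mixedn 4 l - mixedn 5 l
  | _ => mixedn n l end.
Definition sum8 (g : nat -> rat) := foldr (fun l acc => g l + acc) 0 (iota 0 8).

Lemma checkCN : all (fun i => all (fun j =>
   sum8 (fun l => circn i.+1 l * nq l j) == (i == j)%:R) (iota 0 8)) (iota 0 8).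
Proof. by vm_compute. Qed.
Lemma checkMN : all (fun l =>
  (sum8 (fun m => Mq l m * nq m 3) == -2%:R * nq l 3) &&
  (sum8 (fun m => Mq l m * nq m 4) == 2%:R * nq l 4)) (iota 0 8).
Proof. by vm_compute. Qed.

Section S.
Variable R : realFieldType.

Lemma sum_iota8 (G : nat -> R) :
  \sum_(l < 8) G l = foldr (fun l acc => G l + acc) 0 (iota 0 8).
Proof.
rewrite -(big_mkord xpredT G) /index_iota subn0.
by elim: (iota 0 8) => [|x s IH]; rewrite ?big_nil ?big_cons ?IH.
Qed.

Lemma ratr_sum8 (g : nat -> rat) : ratr (sum8 g) = foldr (fun l acc => ratr (g l) + acc) 0 (iota 0 8) :> R.
Proof.
rewrite /sum8; elim: (iota 0 8) => [|x s IH] /=; first by rewrite rmorph0.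
by rewrite rmorphD; congr (_ + _); exact: IH.
Qed.

Lemma circ_coef_ratr (n : nat) (l : 'I_8) : circ_coef R n l = ratr (circn n l).
Proof.
rewrite /circ_coef /circn /mixed_coef /mixedn /rc /rcn /half.
case: l => [[|[|[|[|[|[|[|[|//]]]]]]]]] ?;
case: n => [|[|[|[|[|[|[|[|[|n]]]]]]]]] /=;
rewrite ?(rmorphM, rmorphD, rmorphN, rmorphB, fmorphV, rmorph_nat, rmorph1, rmorph0) //.
all: by field.
Qed.


Definition Nexp : 'M[R]_8 := \matrix_(l < 8, j < 8) ratr (nq l j).

Lemma sum8_ratr (g : nat -> rat) : \sum_(l < 8) ratr (g l) = ratr (sum8 g) :> R.
Proof. by rewrite (sum_iota8 (fun l => ratr (g l))) ratr_sum8. Qed.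

Lemma CN1 : circ_mx R *m Nexp = 1%:M.
Proof.
apply/matrixP => i j; rewrite !mxE.
rewrite (eq_bigr (fun l : 'I_8 => ratr (circn i.+1 l * nq l j))); last first.
  by move=> l _; rewrite ?mxE circ_coef_ratr rmorphM.
rewrite (sum8_ratr (fun l => circn i.+1 l * nq l j)).
have hi : (i : nat) \in iota 0 8 by rewrite mem_iota ltn_ord.
have hj : (j : nat) \in iota 0 8 by rewrite mem_iota ltn_ord.
have /eqP -> := allP (allP checkCN _ hi) _ hj.
by rewrite rmorph_nat.
Qed.

Lemma invmxE : invmx (circ_mx R) = Nexp.
Proof.
have [uC _] := mulmx1_unit CN1.
by rewrite -[RHS]mul1mx -(mulVmx uC) -mulmxA CN1 mulmx1.
Qed.

End S.

Arguments sum_only {R T} a {F}.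

Definition good4 (c : 'I_8) := (c == idx4) || (c == idx5).

Section S.
Variable R : realFieldType.
Local Notation N := (invmx (circ_mx R)).

Lemma N_val (l j : 'I_8) : N l j = ratr (nq l j).
Proof. by rewrite invmxE mxE. Qed.

Definition lam (c : 'I_8) : R := if c == idx4 then - 2%:R else 2%:R.

Lemma eig (k c : 'I_8) : good4 c ->
  \sum_(m < 8) ratr (Mq k m) * N m c = lam c * N k c.
Proof.
move=> gc.
have hk : (k : nat) \in iota 0 8 by rewrite mem_iota ltn_ord.
have /andP[e3 e4] := allP checkMN _ hk.
rewrite (eq_bigr (fun m : 'I_8 => ratr (Mq k m * nq m c))); last first.
  by move=> m _; rewrite N_val rmorphM.
rewrite (sum8_ratr R (fun m => Mq k m * nq m c)) N_val /lam.
case/orP: gc => /eqP -> /=.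
  by rewrite (eqP e3) rmorphM rmorphN rmorph_nat.
by rewrite (eqP e4) rmorphM rmorph_nat.
Qed.

Lemma good_lsign (k c : 'I_8) : good4 c -> lsign Jb k -> N k c = 0.
Proof.
rewrite N_val; case/orP => /eqP ->;
by case: k => [[|[|[|[|[|[|[|[|//]]]]]]]]] ? //=; rewrite rmorph0.
Qed.

Lemma wsign_good s : all (fun k => ~~ lsign Jb k) s -> wsign Jb s = false.
Proof. by elim: s => //= k s IH /andP[/negbTE -> /IH ->]. Qed.

Variable n : nat.
Variable vt : n.-tuple 'I_8.
Hypothesis hv : forall i, good4 (tnth vt i).

Definition PiN (u : n.-tuple 'I_8) : R := \prod_(i < n) N (tnth u i) (tnth vt i).

Lemma piN_sgn (u : n.-tuple 'I_8) k : PiN u * sgn R (wsign Jb (drop k u)) = PiN u.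
Proof.
case: (boolP (all (fun k => ~~ lsign Jb k) u)) => [ha|].
  rewrite wsign_good ?mulr1 //; apply/allP => x /mem_drop hx.
  exact: (allP ha).
case/allPn => x /tnthP [i ->] /negPn bad.
by rewrite /PiN (bigD1 i) //= good_lsign ?mul0r.
Qed.

Definition upd (w : n.-tuple 'I_8) (j : 'I_n) (m : 'I_8) : n.-tuple 'I_8 :=
  [tuple (if i == j then m else tnth w i) | i < n].

Lemma tnth_upd w j m i : tnth (upd w j m) i = if i == j then m else tnth w i.
Proof. by rewrite tnth_mktuple. Qed.

Lemma cond_upd (u w : n.-tuple 'I_8) (j : 'I_n) :
  (tval u == set_nth o0 w j (nth o0 u j)) = (u == upd w j (tnth u j)).
Proof.
apply/eqP/eqP => h.
  apply: eq_from_tnth => i; rewrite tnth_upd [in LHS](tnth_nth o0) [in LHS]h nth_set_nth /=.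
  by rewrite !(tnth_nth o0).
apply: (@eq_from_nth _ o0).
  by rewrite size_set_nth !size_tuple; apply/esym/maxn_idPr; rewrite ltn_ord.
move=> i; rewrite size_tuple => hi.
have e := congr1 (fun t => tnth t (Ordinal hi)) h.
rewrite /= tnth_upd !(tnth_nth o0) /= in e.
by rewrite e nth_set_nth /=.
Qed.


Lemma reindex (w : n.-tuple 'I_8) (j : 'I_n) (G : n.-tuple 'I_8 -> R) :
  \sum_(u : n.-tuple 'I_8) (if u == upd w j (tnth u j) then G u else 0)
  = \sum_(m : 'I_8) G (upd w j m).
Proof.
transitivity (\sum_(m : 'I_8) \sum_(u : n.-tuple 'I_8) (if u == upd w j m then G u else 0)).
  rewrite exchange_big; apply: eq_bigr => u _.
  rewrite (sum_only (tnth u j)) // => m nm.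
  case: eqP => // hu; case/eqP: nm; by rewrite {1}hu tnth_upd eqxx.
apply: eq_bigr => m _; rewrite (sum_only (upd w j m)) ?eqxx // => u nu.
by rewrite (negbTE nu).
Qed.

Lemma PiN_upd (w : n.-tuple 'I_8) j m :
  PiN (upd w j m) = N m (tnth vt j) * \prod_(i < n | i != j) N (tnth w i) (tnth vt i).
Proof.
rewrite /PiN (bigD1 j) //= tnth_upd eqxx; congr (_ * _).
by apply: eq_bigr => i /negbTE ne; rewrite tnth_upd ne.
Qed.

Lemma PiN_split (w : n.-tuple 'I_8) j :
  PiN w = N (tnth w j) (tnth vt j) * \prod_(i < n | i != j) N (tnth w i) (tnth vt i).
Proof. by rewrite /PiN (bigD1 j). Qed.

Lemma core1 (w : n.-tuple 'I_8) :
  \sum_(u : n.-tuple 'I_8) PiN u * Sw R Mq w u = (\sum_(j < n) lam (tnth vt j)) * PiN w.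
Proof.
rewrite mulr_suml.
transitivity (\sum_(u : n.-tuple 'I_8) \sum_(j < n)
   (if u == upd w j (tnth u j) then PiN u * ratr (Mq (tnth w j) (tnth u j)) else 0)).
  apply: eq_bigr => u _; rewrite /Sw size_tuple mulr_sumr; apply: eq_bigr => j _.
  rewrite cond_upd -!(tnth_nth o0); case: ifP => _; last by rewrite mulr0.
  by rewrite mulrCA piN_sgn mulrC.
rewrite exchange_big; apply: eq_bigr => j _.
rewrite (reindex w j (fun u => PiN u * ratr (Mq (tnth w j) (tnth u j)))).
rewrite (eq_bigr (fun m : 'I_8 => ratr (Mq (tnth w j) m) * N m (tnth vt j) *
     \prod_(i < n | i != j) N (tnth w i) (tnth vt i))); last first.
  by move=> m _; rewrite PiN_upd tnth_upd eqxx; ring.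
by rewrite -mulr_suml eig // (PiN_split w j) mulrA.
Qed.

End S.

Section S.
Variable R : realFieldType.
Variable n : nat.
Variable vt : n.-tuple 'I_8.
Hypothesis hv : forall i, good4 (tnth vt i).

Lemma core (f : pser R) :
  \sum_(u : n.-tuple 'I_8) PiN R vt u * Sf Mq f u =
  (\sum_(j < n) lam R (tnth vt j)) * \sum_(w : n.-tuple 'I_8) f w * PiN R vt w.
Proof.
rewrite (eq_bigr (fun u : n.-tuple 'I_8 =>
   \sum_(w : n.-tuple 'I_8) f w * (PiN R vt u * Sw R Mq w u))); last first.
  move=> u _; rewrite /Sf size_tuple mulr_sumr; apply: eq_bigr => w _; ring.
rewrite exchange_big mulr_sumr; apply: eq_bigr => w _.
by rewrite -mulr_sumr core1 // mulrCA.
Qed.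

Lemma sum_PiN (g : pser R) (h : seq 'I_8 -> R) :
  (forall u : n.-tuple 'I_8, Sf Mq g u = h u) ->
  \sum_(u : n.-tuple 'I_8) PiN R vt u * h u =
  (\sum_(j < n) lam R (tnth vt j)) * \sum_(w : n.-tuple 'I_8) g w * PiN R vt w.
Proof.
move=> H; rewrite -core; apply: eq_bigr => u _; by rewrite H.
Qed.

End S.

Lemma lam_sum (R : realFieldType) (v : seq 'I_8) :
  all good4 v ->
  \sum_(j < size v) lam R (tnth (in_tuple v) j) =
  - 2%:R * ((count_mem idx4 v)%:R - (count_mem idx5 v)%:R).
Proof.
rewrite -(big_tuple _ _ (in_tuple v) xpredT (lam R)) /=.
elim: v => [|x v IH] /=; first by rewrite big_nil subrr mulr0.
case/andP => gx /IH {}IH; rewrite big_cons IH /lam.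
case/orP: gx => /eqP ->; rewrite eqxx /= ?add0n ?add1n ?natrS; ring.
Qed.

Lemma sum_diff (R : realFieldType) n (vt : n.-tuple 'I_8) (g1 g2 : pser R) :
  \sum_(u : n.-tuple 'I_8) PiN R vt u * (g1 u - g2 u) =
  \sum_(w : n.-tuple 'I_8) g1 w * PiN R vt w - \sum_(w : n.-tuple 'I_8) g2 w * PiN R vt w.
Proof. rewrite -sumrB; apply: eq_bigr => u _; ring. Qed.

Theorem mainTheorem1 (R : realFieldType) (Xi : fqop R) (s : sidx) (f : pser R)
    (v : seq 'I_8) :
  orth_invariant Xi ->
  fq_component Xi s = Some f ->
  all (fun i => (i == idx4) || (i == idx5)) v ->
  let d : int := (count_mem idx4 v)%:Z - (count_mem idx5 v)%:Z in
  d <> 0 ->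
  (s = s_0 \/ s = s_12 \/ d <> 1) ->
  ptilde f v = 0.
Proof.
move=> Hinv Hcomp Hall d Hd Hs.
pose vt := in_tuple v.
have hv : forall i, good4 (tnth vt i) by move=> i; exact: (allP Hall _ (mem_tnth i vt)).
have Hp : forall g : pser R, ptilde g v = \sum_(w : (size v).-tuple 'I_8) g w * PiN R vt w by [].
pose lamv := \sum_(j < size v) lam R (tnth vt j).
have Hl : lamv = - 2%:R * d%:~R.
  by rewrite /lamv lam_sum // /d intrB -!pmulrn.
have lam0 : lamv != 0.
  by rewrite Hl mulf_eq0 negb_or oppr_eq0 pnatr_eq0 /= intr_eq0; apply/eqP.
case: Xi Hinv Hcomp => [f0|f1 f2|f0] Hinv; case: s Hs => //= Hs [<-].
- have := @sum_PiN R _ vt hv f0 (fun _ => 0) (fun u => rel_scalar Hinv u).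
  rewrite big1 => [|u _]; last by rewrite mulr0.
  move/esym/eqP; rewrite -/lamv mulf_eq0 (negbTE lam0) /= => /eqP.
  by rewrite Hp.
- case: Hs => [//|[//|Hd1]].
  have e1 := @sum_PiN R _ vt hv f1 (fun u => f2 u - f1 u) (fun u => (rel_vect Hinv u).1).
  have e2 := @sum_PiN R _ vt hv f2 (fun u => f1 u - f2 u) (fun u => (rel_vect Hinv u).2).
  rewrite (sum_diff vt f2 f1) -/lamv in e1.
  rewrite (sum_diff vt f1 f2) -/lamv in e2.
  set P1 := \sum_(w : (size v).-tuple 'I_8) f1 w * PiN R vt w in e1 e2 *.
  set P2 := \sum_(w : (size v).-tuple 'I_8) f2 w * PiN R vt w in e1 e2 *.
  have Hl2 : lamv + 2%:R != 0.
    rewrite Hl (_ : - 2%:R * d%:~R + 2%:R = - 2%:R * (d - 1)%:~R :> R); last by rewrite [in RHS]intrB; ring.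
    by rewrite mulf_eq0 negb_or oppr_eq0 pnatr_eq0 /= intr_eq0 subr_eq0; apply/eqP.
  have h1 : (lamv + 1) * P1 = P2 by rewrite mulrDl mul1r -e1; ring.
  have h2 : (lamv + 1) * P2 = P1 by rewrite mulrDl mul1r -e2; ring.
  have : lamv * (lamv + 2%:R) * P1 = 0.
    rewrite (_ : lamv * (lamv + 2%:R) * P1 = (lamv + 1) * ((lamv + 1) * P1) - P1); last by ring.
    by rewrite h1 h2 subrr.
  move/eqP; rewrite !mulf_eq0 (negbTE lam0) (negbTE Hl2) /= => /eqP.
  by rewrite Hp.
- case: Hs => [//|[//|Hd1]].
  have e1 := @sum_PiN R _ vt hv f1 (fun u => f2 u - f1 u) (fun u => (rel_vect Hinv u).1).
  have e2 := @sum_PiN R _ vt hv f2 (fun u => f1 u - f2 u) (fun u => (rel_vect Hinv u).2).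
  rewrite (sum_diff vt f2 f1) -/lamv in e1.
  rewrite (sum_diff vt f1 f2) -/lamv in e2.
  set P1 := \sum_(w : (size v).-tuple 'I_8) f1 w * PiN R vt w in e1 e2 *.
  set P2 := \sum_(w : (size v).-tuple 'I_8) f2 w * PiN R vt w in e1 e2 *.
  have Hl2 : lamv + 2%:R != 0.
    rewrite Hl (_ : - 2%:R * d%:~R + 2%:R = - 2%:R * (d - 1)%:~R :> R); last by rewrite [in RHS]intrB; ring.
    by rewrite mulf_eq0 negb_or oppr_eq0 pnatr_eq0 /= intr_eq0 subr_eq0; apply/eqP.
  have h1 : (lamv + 1) * P1 = P2 by rewrite mulrDl mul1r -e1; ring.
  have h2 : (lamv + 1) * P2 = P1 by rewrite mulrDl mul1r -e2; ring.
  have : lamv * (lamv + 2%:R) * P2 = 0.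
    rewrite (_ : lamv * (lamv + 2%:R) * P2 = (lamv + 1) * ((lamv + 1) * P2) - P2); last by ring.
    by rewrite h2 h1 subrr.
  move/eqP; rewrite !mulf_eq0 (negbTE lam0) (negbTE Hl2) /= => /eqP.
  by rewrite Hp.
- have := @sum_PiN R _ vt hv f0 (fun _ => 0) (fun u => rel_pseudo Hinv u).
  rewrite big1 => [|u _]; last by rewrite mulr0.
  move/esym/eqP; rewrite -/lamv mulf_eq0 (negbTE lam0) /= => /eqP.
  by rewrite Hp.
Qed.
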